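(* In the setting described in the context, let $w\in\mathbb{Z}^{n-1}_{\ge0}$ and $z\in M$, and assume that $R_w$ contains two coprime monomials. Then $\dim_{\mathbb{K}}R_{w+z}=\dim_{\mathbb{K}}R_w+\dim_{\mathbb{K}}R_z-1$.
   Context: Let $\mathbb{K}$ be a field. A Newton polyhedron is the convex hull of $S+\mathbb{R}^n_{\ge0}$ for a nonempty finite $S\subset\mathbb{Z}^n_{\ge0}$; for $\xi\in\mathbb{R}^n_{\ge0}$ the face $\Delta^\xi=\{a\in\Delta:\langle\xi,a\rangle=\min_{b\in\Delta}\langle\xi,b\rangle\}$ is compact iff $\xi\in\mathbb{R}^n_{>0}$; a loose edge is a compact 1-dimensional face not contained in any compact face of dimension $\ge2$. Let $\Delta$ be a Newton polyhedron with a loose edge $E$, let $c\in\mathbb{Z}^n$ be a primitive lattice vector parallel to $E$, and let $\xi_1,\dots,\xi_{n-1}\in\mathbb{Z}^n_{\ge0}$ be linearly independent vectors with $\langle\xi_i,c\rangle=0$. For $\alpha\in\mathbb{Z}^n$ put $\omega(\underline x^\alpha)=(\langle\xi_1,\alpha\rangle,\dots,\langle\xi_{n-1},\alpha\rangle)$ (the weight). For $w\in\mathbb{Z}^{n-1}_{\ge0}$ let $R_w\subset\mathbb{K}[x_1,\dots,x_n]$ be the $\mathbb{K}$-span of the monomials $\underline x^\alpha$, $\alpha\in\mathbb{Z}^n_{\ge0}$, with $\omega(\underline x^\alpha)=w$ (so $\mathbb{K}[x_1,\dots,x_n]=\bigoplus_w R_w$ is graded and each $R_w$ is finite-dimensional).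 Let $M$ be the set of $z\in\mathbb{Z}^{n-1}_{\ge0}$ for which there is $\alpha\in\mathbb{Z}^n$ with $\omega(\underline x^\alpha)=z$ and $\langle\xi,\alpha\rangle\ge0$ for all $\xi\in\mathbb{R}^n_{\ge0}$ orthogonal to $E$ (i.e. to $c$). *)

(* Defs.v *)
From HB Require Import structures.
From mathcomp Require Import all_boot all_order all_algebra.
From mathcomp Require Import reals.
From mathcomp Require Import mpoly.

Set Implicit Arguments.
Unset Strict Implicit.
Unset Printing Implicit Defensive.

Import Order.TTheory GRing.Theory Num.Theory.
Local Open Scope ring_scope.

Definition dotR (R : realType) (n : nat) (u v : 'I_n -> R) : R :=
  \sum_(i < n) u i * v i.

Definition minkowski_orthant (R : realType) (n m : nat)
    (s : 'I_m.+1 -> 'I_n -> nat) : ('I_n -> R) -> Prop :=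
  fun a => exists k : 'I_m.+1, forall i, ((s k i)%:R : R) <= a i.

Definition conv_hull (R : realType) (n : nat) (A : ('I_n -> R) -> Prop) :
    ('I_n -> R) -> Prop :=
  fun a => exists (k : nat) (p : 'I_k -> 'I_n -> R) (l : 'I_k -> R),
    [/\ forall j, A (p j),
        forall j, 0 <= l j,
        \sum_(j < k) l j = 1
      & forall i, a i = \sum_(j < k) l j * p j i].

(* Delta is a Newton polyhedron: Delta = conv(S + R^n_{>=0}) for a nonempty
   finite S subset of Z^n_{>=0} (S enumerated as s_0, ..., s_m). *)
Definition is_newton_polyhedron (R : realType) (n : nat)
    (Delta : ('I_n -> R) -> Prop) : Prop :=
  exists (m : nat) (s : 'I_m.+1 -> 'I_n -> nat),
    forall a, Delta a <-> conv_hull (@minkowski_orthant R n m s) a.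

Definition face (R : realType) (n : nat) (Delta : ('I_n -> R) -> Prop)
    (xi : 'I_n -> R) : ('I_n -> R) -> Prop :=
  fun a => Delta a /\ forall b, Delta b -> dotR xi a <= dotR xi b.

(* compact faces: the faces Delta^xi with xi in R^n_{>0}
   (the context states Delta^xi, xi in R^n_{>=0}, is compact iff xi in R^n_{>0}) *)
Definition compact_face (R : realType) (n : nat) (Delta : ('I_n -> R) -> Prop)
    (F : ('I_n -> R) -> Prop) : Prop :=
  exists xi : 'I_n -> R, (forall i, 0 < xi i) /\ forall a, F a <-> face Delta xi a.

Definition aff_indep_in (R : realType) (n : nat) (F : ('I_n -> R) -> Prop)
    (k : nat) : Prop :=
  exists (p0 : 'I_n -> R) (p : 'I_k -> 'I_n -> R),
    [/\ F p0, forall j, F (p j)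
      & forall cf : 'I_k -> R,
          (forall i, \sum_(j < k) cf j * (p j i - p0 i) = 0) -> forall j, cf j = 0].

Definition aff_dim (R : realType) (n : nat) (F : ('I_n -> R) -> Prop) (d : nat) : Prop :=
  aff_indep_in F d /\ ~ aff_indep_in F d.+1.

Definition loose_edge (R : realType) (n : nat) (Delta : ('I_n -> R) -> Prop)
    (E : ('I_n -> R) -> Prop) : Prop :=
  [/\ compact_face Delta E, aff_dim E 1
    & forall F, compact_face Delta F -> (forall a, E a -> F a) -> ~ aff_indep_in F 2].

Definition primitive (n : nat) (c : 'I_n -> int) : Prop :=
  forall d : int, (forall i, (d %| c i)%Z) -> `|d| = 1.

Definition parallel_to (R : realType) (n : nat) (c : 'I_n -> int)
    (E : ('I_n -> R) -> Prop) : Prop :=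
  exists a b : 'I_n -> R, [/\ E a, E b, a <> b
    & exists t : R, forall i, b i - a i = t * (c i)%:~R].

Definition lin_indep_family (R : realType) (n k : nat) (xi : 'I_k -> 'I_n -> nat) : Prop :=
  forall cf : 'I_k -> R,
    (forall j, \sum_(i < k) cf i * (xi i j)%:R = 0) -> forall i, cf i = 0.

Definition in_M (R : realType) (n : nat) (xi : 'I_n.-1 -> 'I_n -> nat)
    (c : 'I_n -> int) (z : 'I_n.-1 -> nat) : Prop :=
  exists alpha : 'I_n -> int,
    (forall i, \sum_(j < n) (xi i j)%:Z * alpha j = (z i)%:Z) /\
    forall v : 'I_n -> R, (forall i, 0 <= v i) ->
      \sum_(j < n) v j * (c j)%:~R = 0 ->
      0 <= \sum_(j < n) v j * (alpha j)%:~R.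

Definition has_weight (n : nat) (xi : 'I_n.-1 -> 'I_n -> nat) (m : 'X_{1..n})
    (w : 'I_n.-1 -> nat) : Prop :=
  forall i, (\sum_(j < n) xi i j * m j)%N = w i.

Definition Rw (K : fieldType) (n : nat) (xi : 'I_n.-1 -> 'I_n -> nat)
    (w : 'I_n.-1 -> nat) : {mpoly K[n]} -> Prop :=
  fun p => exists (k : nat) (ms : 'I_k -> 'X_{1..n}) (cs : 'I_k -> K),
    (forall j, has_weight xi (ms j) w) /\ p = \sum_(j < k) cs j *: 'X_[ms j].

Definition dimK (K : fieldType) (n : nat) (V : {mpoly K[n]} -> Prop) (d : nat) : Prop :=
  exists b : 'I_d -> {mpoly K[n]},
    [/\ forall j, V (b j),
        forall cs : 'I_d -> K, \sum_(j < d) cs j *: b j = 0 -> forall j, cs j = 0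
      & forall p, V p -> exists cs : 'I_d -> K, p = \sum_(j < d) cs j *: b j].

Definition mcoprime (K : fieldType) (n : nat) (p q : {mpoly K[n]}) : Prop :=
  forall d : {mpoly K[n]}, (exists a, p = d * a) -> (exists b, q = d * b) ->
    exists e, d * e = 1.

(* Main.v *)
Require Import Defs.
From HB Require Import structures.
From mathcomp Require Import all_boot all_order all_algebra.
From mathcomp Require Import reals.
From mathcomp Require Import mpoly.
From mathcomp Require Import zify ring lra.
From Stdlib Require Import FunctionalExtensionality Classical.
Import Order.TTheory GRing.Theory Num.Theory.
Local Open Scope ring_scope.

Lemma geom (R : realType) n (Delta E : ('I_n -> R) -> Prop) (c : 'I_n -> int) :
  loose_edge Delta E -> parallel_to c E -> (exists i, 0 < c i) /\ (exists j, c j < 0).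
Proof.
case=> [[xi [xipos HE]] _ _] [a [b [Ea Eb ab [t Ht]]]].
have [_ fa] := (HE a).1 Ea; have [Db fb] := (HE b).1 Eb.
have [Da _] := (HE a).1 Ea.
have eqd : dotR xi a = dotR xi b by apply/eqP; rewrite eq_le fa // fb.
have hs : t * \sum_(i < n) xi i * (c i)%:~R = 0.
  have : dotR xi b - dotR xi a = 0 by rewrite eqd subrr.
  rewrite /dotR -sumrB => h; apply: etrans h; rewrite mulr_sumr; apply: eq_bigr => i _.
  by rewrite -mulrBr Ht mulrCA.
have t0 : t != 0.
  apply/eqP=> t0; apply: ab; apply: functional_extensionality => i; apply/eqP; rewrite eq_sym -subr_eq0 Ht t0 mul0r //.
have s0 : \sum_(i < n) xi i * (c i)%:~R = 0 by move/eqP: hs; rewrite mulf_eq0 (negbTE t0) => /eqP.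
have call : (forall i, c i = 0) -> False.
  move=> c0; apply: ab; apply: functional_extensionality => i; apply/eqP; rewrite eq_sym -subr_eq0 Ht c0 mulr0 //.
have key : forall sg : int, (sg = 1 \/ sg = -1) -> exists i, 0 < sg * c i.
  move=> sg hsg; case: (boolP [exists i, 0 < sg * c i]) => [/existsP //|/existsPn hc].
  exfalso; apply: call => i.
  have hle : forall j, 0 <= xi j * (- (sg * c j))%:~R.
    by move=> j; rewrite mulr_ge0 ?(ltW (xipos j)) // ler0z oppr_ge0 leNgt hc.
  have hs2 : \sum_(j < n) xi j * (- (sg * c j))%:~R = 0.
    by rewrite (eq_bigr (fun j => (- sg)%:~R * (xi j * (c j)%:~R))) ?s0 -?mulr_sumr ?s0 ?mulr0 // => j _; rewrite !intrN !intrM; ring.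
  have := psumr_eq0P (fun j _ => hle j) hs2 (isT : true) (i:=i).
  move/eqP; rewrite mulf_eq0 gt_eqF //= intr_eq0 oppr_eq0 mulf_eq0 => /orP [/eqP sg0|/eqP //].
  by case: hsg; rewrite sg0.
split; first by have [i] := key 1 (or_introl erefl); rewrite mul1r; exists i.
have [i] := key (-1) (or_intror erefl); rewrite mulN1r oppr_gt0; by exists i.
Qed.

Lemma widen_lift n (j : 'I_n) : widen_ord (leqnSn n) j = lift ord_max j.
Proof. by apply: val_inj; rewrite /= /bump leqNgt ltn_ord. Qed.

Lemma bez n (c : 'I_n -> int) : exists g (u : 'I_n -> int),
  (forall i, (g %| c i)%Z) /\ \sum_(i < n) u i * c i = g.
Proof.
elim: n c => [|n IH] c.
  by exists 0, (fun _ => 0); split; [case | rewrite big_ord0].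
have [g' [u' [hd hs]]] := IH (fun i => c (widen_ord (leqnSn n) i)).
have [a [b hab]] := Bezoutz g' (c ord_max).
exists (gcdz g' (c ord_max)).
exists (fun i => if unlift ord_max i is Some j then a * u' j else b).
split.
  move=> i; case: (unliftP ord_max i) => [j ->|->]; last exact: dvdz_gcdr.
  by apply: dvdz_trans (dvdz_gcdl _ _) _; rewrite -widen_lift.
rewrite big_ord_recr /= unlift_none -hab -hs mulr_sumr; congr (_ + _).
by apply: eq_bigr => j _; rewrite widen_lift liftK -widen_lift mulrA.
Qed.

Lemma prim_bez n (c : 'I_n -> int) : primitive c ->
  exists u : 'I_n -> int, \sum_(i < n) u i * c i = 1.
Proof.
move=> pc; have [g [u [hd hs]]] := bez _ c.
have := pc g hd; move=> hg.
exists (fun i => g * u i).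
rewrite (eq_bigr (fun i => g * (u i * c i))) => [|i _]; last by rewrite mulrA.
rewrite -mulr_sumr hs; move: hg; lia.
Qed.

Lemma intr_sum (R : pzRingType) (I : Type) (r : seq I) (P : pred I) (F : I -> int) :
  (\sum_(i <- r | P i) F i)%:~R = \sum_(i <- r | P i) (F i)%:~R :> R.
Proof. by apply: (big_morph (fun x : int => x%:~R : R)) => // x y; rewrite intrD. Qed.

Lemma kern (R : realType) n (xi : 'I_n.-1 -> 'I_n -> nat) (c : 'I_n -> int)
  (u : 'I_n -> int) :
  @lin_indep_family R n n.-1 xi -> (forall i, \sum_(j < n) (xi i j)%:Z * c j = 0) ->
  \sum_(i < n) u i * c i = 1 ->
  forall g d : 'I_n -> int, (forall i, \sum_(j < n) (xi i j)%:Z * g j = \sum_(j < n) (xi i j)%:Z * d j) ->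
  exists s, forall j, g j = d j + s * c j.
Proof.
move=> li hc hu g d hgd.
have n0 : (0 < n)%N.
  rewrite lt0n; apply/eqP => n0; subst n; move: hu; rewrite big_ord0 => /eqP; by rewrite eq_sym oner_eq0.
pose X : 'M[R]_(n.-1, n) := \matrix_(i, j) (xi i j)%:R.
have rX : \rank X = n.-1.
  apply/eqP; rewrite -/(row_free X) -kermx_eq0; apply/eqP/matrixP => i j.
  have := mulmx_ker X => /matrixP H.
  transitivity (0 : R); last by rewrite mxE.
  apply: (li (fun k => kermx X i k) _ j).
  move=> l; have := H i l; rewrite [X in _ = X -> _]mxE mxE => h; apply: (etrans _ h); by apply: eq_bigr => k _; congr (_ * _); rewrite /X mxE.
pose K := kermx X^T.
have rK : \rank K = 1%N by rewrite mxrank_ker mxrank_tr rX; move: n0; clear; lia.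
pose cr : 'rV[R]_n := \row_j (c j)%:~R.
pose dr : 'rV[R]_n := \row_j (g j - d j)%:~R.
have inK : forall v : 'I_n -> int, (forall i, \sum_(j < n) (xi i j)%:Z * v j = 0) ->
    (\row_j (v j)%:~R <= K)%MS.
  move=> v hv; apply/sub_kermxP/matrixP => a i; rewrite [X in _ = X]mxE mxE.
  have := congr1 (fun x : int => x%:~R : R) (hv i); rewrite intr_sum /= => h.
  by apply: (etrans _ h); apply: eq_bigr => j _; rewrite !mxE intrM mulrC.
have cK := inK c hc.
have dK : (dr <= K)%MS.
  apply: inK => i; rewrite (eq_bigr (fun j => (xi i j)%:Z * g j - (xi i j)%:Z * d j)); last by move=> j _; rewrite mulrBr.
  by rewrite sumrB hgd subrr.
have cr0 : cr != 0.
  apply/negP => /eqP/matrixP h.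
  move: hu; rewrite big1 => [/eqP|i _]; first by rewrite eq_sym oner_eq0.
  by have := h 0 i; rewrite !mxE => /eqP; rewrite intr_eq0 => /eqP ->; rewrite mulr0.
have Kc : (K <= cr)%MS.
  have := (mxrank_leqif_sup cK).2; rewrite rK rank_rV cr0 eqxx => /esym //.
have [D hD] := submxP (submx_trans dK Kc).
move: hD; rewrite [D]mx11_scalar mul_scalar_mx => /matrixP hD.
set r := D 0 0 in hD.
have hj : forall j, (g j - d j)%:~R = r * (c j)%:~R :> R.
  by move=> j; have := hD 0 j; rewrite !mxE.
exists (\sum_(i < n) u i * (g i - d i)) => j.
have : (g j - d j)%:~R = ((\sum_(i < n) u i * (g i - d i)) * c j)%:~R :> R.
  rewrite hj intrM intr_sum; congr (_ * _).
  rewrite (eq_bigr (fun i => r * (u i * c i)%:~R)); last by move=> i _; rewrite !intrM hj; ring.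
  by rewrite -mulr_sumr -intr_sum hu mulr1.
by move/eqP; rewrite eqr_int => /eqP <-; ring.
Qed.

Lemma up_iter (P : pred int) : (forall s, P s -> P (s + 1)) ->
  forall x (k : nat), P x -> P (x + k%:Z).
Proof.
move=> hP x; elim=> [|k IH] hx; first by rewrite addr0.
by have := hP _ (IH hx); congr (P _); lia.
Qed.

Lemma up_le (P : pred int) : (forall s, P s -> P (s + 1)) ->
  forall x y, x <= y -> P x -> P y.
Proof.
move=> hP x y hxy hx; have := up_iter P hP x `|y - x|%N hx.
rewrite gez0_abs ?subr_ge0 //; by congr (P _); ring.
Qed.

Lemma up_bound (P : pred int) : (forall s, P s -> P (s + 1)) ->
  forall a b, P a -> ~~ P b -> exists L, forall s, P s = (L <= s).
Proof.
move=> hP.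
have main : forall m : nat, forall b, ~~ P b -> P (b + m%:Z) -> exists L, forall s, P s = (L <= s).
  elim=> [|m IH] b nb; first by rewrite addr0 (negbTE nb).
  case hb1 : (P (b + 1)) => hm.
    exists (b + 1) => s; apply/idP/idP => [ps|].
      rewrite leNgt; apply/negP => hs; move: nb; rewrite (up_le P hP s) //; lia.
    by move=> h; exact: (up_le P hP (b+1) s h hb1).
  apply: (IH (b + 1)); first by rewrite hb1.
  by move: hm; congr (P _); lia.
move=> a b pa nb.
have ba : b < a.
  rewrite ltNge; apply/negP => ab; move: nb; by rewrite (up_le P hP a).
apply: (main `|a - b|%N b nb); rewrite gez0_abs ?subr_ge0 ?ltW //; move: pa; by congr (P _); ring.
Qed.

Lemma down_bound (Q : pred int) : (forall s, Q (s + 1) -> Q s) ->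
  forall a b, Q a -> ~~ Q b -> exists U, forall s, Q s = (s <= U).
Proof.
move=> hQ a b qa nb.
have hP : forall s, Q (- s) -> Q (- (s + 1)) by move=> s h; apply: hQ; rewrite opprD subrK.
have := up_bound (fun s => Q (- s)) hP (- a) (- b); rewrite /= !opprK => /(_ qa nb) [L hL].
exists (- L) => s; by rewrite -[s]opprK hL lerNr opprK.
Qed.

Lemma Posz_sum (I : Type) (r : seq I) (P : pred I) (F : I -> nat) :
  (\sum_(i <- r | P i) F i)%N%:Z = \sum_(i <- r | P i) (F i)%:Z.
Proof. by apply: (big_morph Posz) => // x y; rewrite PoszD. Qed.

Lemma has_weightE n (xi : 'I_n.-1 -> 'I_n -> nat) (m : 'X_{1..n}) w :
  has_weight xi m w <-> forall i, \sum_(j < n) (xi i j)%:Z * (m j)%:Z = (w i)%:Z.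
Proof.
split=> h i; first by rewrite -(h i) Posz_sum.
by apply/eqP; rewrite -eqz_nat Posz_sum; apply/eqP; rewrite -(h i).
Qed.

Lemma DL (K : fieldType) n (xi : 'I_n.-1 -> 'I_n -> nat) (c : 'I_n -> int)
  (w : 'I_n.-1 -> nat) (b : 'I_n -> int) (L U : int) :
  (forall i, \sum_(j < n) (xi i j)%:Z * c j = 0) ->
  (exists i, c i != 0) ->
  (forall g d : 'I_n -> int, (forall i, \sum_(j < n) (xi i j)%:Z * g j = \sum_(j < n) (xi i j)%:Z * d j) ->
     exists s, forall j, g j = d j + s * c j) ->
  (forall i, \sum_(j < n) (xi i j)%:Z * b j = (w i)%:Z) ->
  (forall s, (forall i, 0 <= b i + s * c i) <-> (L <= s <= U)) ->
  L <= U + 1 ->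
  dimK (@Rw K n xi w) `|(U - L + 1)%R|%N.
Proof.
move=> hc [i0 ci0] kern hb hLU LU.
set d := `|(U - L + 1)%R|%N.
have dE : d%:Z = U - L + 1 by rewrite /d gez0_abs //; lia.
pose mon (s : int) : 'X_{1..n} := [multinom `|(b i + s * c i)%R|%N | i < n].
have monE : forall s, L <= s <= U -> forall i, (mon s i)%:Z = b i + s * c i.
  by move=> s hs i; rewrite mnmE gez0_abs //; apply: (proj2 (hLU s) hs).
have rng : forall j : 'I_d, L <= L + j%:Z <= U.
  by move=> j; have := ltn_ord j; move: dE; lia.
have monI : forall s s', L <= s <= U -> L <= s' <= U -> mon s = mon s' -> s = s'.
  move=> s s' hs hs' /mnmP /(_ i0) /(congr1 Posz); rewrite !monE // => h.
  have /eqP : (s - s') * c i0 = 0 by rewrite mulrBl; move: h; lia.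
  by rewrite mulf_eq0 (negbTE ci0) orbF subr_eq0 => /eqP.
have monW : forall s, L <= s <= U -> has_weight xi (mon s) w.
  move=> s hs; apply/has_weightE => i.
  rewrite (eq_bigr (fun j => (xi i j)%:Z * b j + s * ((xi i j)%:Z * c j))); last first.
    by move=> j _; rewrite monE //; ring.
  by rewrite big_split /= -mulr_sumr hc mulr0 addr0 hb.
exists (fun j => 'X_[mon (L + j%:Z)]); split.
- move=> j; exists 1%N, (fun _ => mon (L + j%:Z)), (fun _ => 1); split.
    by move=> _; apply: monW.
  by rewrite big_ord1 scale1r.
- move=> cs hs j.
  have := congr1 (mcoeff (mon (L + j%:Z))) hs.
  rewrite raddf_sum mcoeff0 (bigD1 j) //= big1 ?addr0 => [|k kj].
    by rewrite mcoeffZ mcoeffX eqxx mulr1.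
  rewrite mcoeffZ mcoeffX; case: eqP => [/monI h|]; last by rewrite mulr0.
  by move: kj; rewrite -(inj_eq val_inj) /=; have := h (rng k) (rng j); lia.
- move=> p [k [ms [cs [hw ->]]]].
  have : forall l : 'I_k, exists j : 'I_d, ms l = mon (L + j%:Z).
    move=> l; have [s hs] : exists s, forall j, (ms l j)%:Z = b j + s * c j.
      apply: kern => i; rewrite hb; exact: (proj1 (has_weightE _ _ _ _) (hw l) i).
    have hsr : L <= s <= U by apply/hLU => i; rewrite -hs.
    have hj : (`|(s - L)%R|%N < d)%N by move: dE hsr; lia.
    exists (Ordinal hj); apply/mnmP => i; apply/eqP; rewrite -eqz_nat.
    have -> : L + (Ordinal hj)%:Z = s by rewrite /= gez0_abs; lia.
    by rewrite monE // hs.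
  case/fin_all_exists => idx hidx.
  exists (fun j => \sum_(l < k | idx l == j) cs l).
  rewrite (partition_big idx predT) //=; apply: eq_bigr => j _.
  rewrite scaler_suml; apply: eq_bigr => l /eqP <-.
  by rewrite hidx.
Qed.

Lemma rw_mono (K : fieldType) n (xi : 'I_n.-1 -> 'I_n -> nat) w (m : 'X_{1..n}) :
  @Rw K n xi w 'X_[m] -> has_weight xi m w.
Proof.
case=> k [ms [cs [hw e]]].
case: (pickP (fun l => ms l == m)) => [l /eqP <- //| none].
have := congr1 (mcoeff m) e; rewrite mcoeffX eqxx raddf_sum big1 => [/eqP|l _].
  by rewrite oner_eq0.
by rewrite /= mcoeffZ mcoeffX none mulr0.
Qed.

Lemma coprime_disj (K : fieldType) n (m1 m2 : 'X_{1..n}) :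
  @mcoprime K n 'X_[m1] 'X_[m2] -> forall i, (m1 i == 0%N) || (m2 i == 0%N).
Proof.
move=> hc i; case h1: (m1 i == 0%N) => //; case h2: (m2 i == 0%N) => //.
move/negbT: h1 => h1; move/negbT: h2 => h2.

have dec : forall m : 'X_{1..n}, m i != 0%N -> 'X_[m] = 'X_i * 'X_[(m - U_(i))%MM] :> {mpoly K[n]}.
  move=> m hm; rewrite -mpolyXD; congr mpolyX; apply/mnmP => j.
  rewrite mnmDE mnmBE mnm1E; case: eqP => [<-|_]; move: hm; lia.
have [e he] := hc 'X_i (ex_intro _ _ (dec _ h1)) (ex_intro _ _ (dec _ h2)).
have := congr1 (meval (fun _ => (0 : K))) he.
by rewrite mevalM mevalXU mul0r meval1 => /eqP; rewrite eq_sym oner_eq0.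
Qed.

Lemma orient n (c : 'I_n -> int) (m1 m2 : 'X_{1..n}) (t : int) :
  (forall j, (m2 j)%:Z = (m1 j)%:Z + t * c j) -> 0 < t ->
  (forall i, (m1 i == 0%N) || (m2 i == 0%N)) ->
  (forall i, 0 < c i -> m1 i = 0%N) /\ (forall i, c i < 0 -> (m1 i)%:Z = - t * c i).
Proof.
move=> hm ht hd; split=> i hci; have := hm i; case/orP: (hd i) => /eqP h; nia.
Qed.

Lemma sum_delta (R : pzRingType) n (i : 'I_n) (a : R) (y : 'I_n -> R) :
  \sum_(l < n) (if l == i then a else 0) * y l = a * y i.
Proof.
rewrite (bigD1 i) //= eqxx big1 ?addr0 // => l /negbTE ->; by rewrite mul0r.
Qed.

Lemma M_facts (R : realType) n (c a : 'I_n -> int) :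
  (forall v : 'I_n -> R, (forall i, 0 <= v i) ->
      \sum_(j < n) v j * (c j)%:~R = 0 ->
      0 <= \sum_(j < n) v j * (a j)%:~R) ->
  (forall i, c i = 0 -> 0 <= a i) /\
  (forall i j s, 0 < c i -> c j < 0 -> a i + s * c i < 0 -> 0 < a j + s * c j).
Proof.
move=> hM; split.
  move=> i ci; have := hM (fun l => if l == i then 1 else 0).
  rewrite !sum_delta ci !mul1r ler0z; apply => // l; by case: ifP.
move=> i j s ci cj hs.
have ij : i != j by apply/eqP => ij; move: ci cj; rewrite ij; lia.
pose v := fun l => (if l == i then (- c j)%:~R else 0) + (if l == j then (c i)%:~R else 0) : R.
have hv : forall y : 'I_n -> R, \sum_(l < n) v l * y l = (- c j)%:~R * y i + (c i)%:~R * y j.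
  by move=> y; rewrite -!sum_delta -big_split /=; apply: eq_bigr => l _; rewrite mulrDl.
have := hM v; rewrite !hv => h.
have h' : 0 <= - c j * a i + c i * a j.
  rewrite -(ler0z R) intrD !intrM; apply: h.
    move=> l; rewrite /v; case: (l =P i) => [li|_]; case: (l =P j) => [lj|_];
      rewrite ?addr0 ?add0r ?ler0z ?lexx //; try lia.
    by move: ij; rewrite -li -lj eqxx.
  by rewrite -!intrM -intrD (_ : _ + _ = 0) //; ring.
nia.
Qed.

Theorem lemma2p4 (R : realType) (K : fieldType) (n : nat)
  (Delta E : ('I_n -> R) -> Prop) (c : 'I_n -> int)
  (xi : 'I_n.-1 -> 'I_n -> nat) (w z : 'I_n.-1 -> nat) :
  is_newton_polyhedron Delta ->
  loose_edge Delta E ->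
  primitive c ->
  parallel_to c E ->
  @lin_indep_family R n n.-1 xi ->
  (forall i, \sum_(j < n) (xi i j)%:Z * c j = 0) ->
  @in_M R n xi c z ->
  (exists m1 m2 : 'X_{1..n}, [/\ m1 != m2, @Rw K n xi w 'X_[m1], @Rw K n xi w 'X_[m2]
                                & @mcoprime K n 'X_[m1] 'X_[m2]]) ->
  exists d1 d2 d3 : nat,
    [/\ dimK (@Rw K n xi w) d1, dimK (@Rw K n xi z) d2,
        dimK (@Rw K n xi (fun i => (w i + z i)%N)) d3
      & d3 = (d1 + d2 - 1)%N].
Proof.
move=> _ hLE hprim hpar hli hc hM [m1 [m2 [neq h1 h2 hcop]]].
have [[ip cip] [jn cjn]] := geom _ _ _ _ _ hLE hpar.
have [u hu] := prim_bez _ c hprim.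
have kr := kern R n xi c u hli hc hu.
have cnz : exists i, c i != 0 by exists ip; rewrite gt_eqF.
have hw1 := rw_mono _ _ _ _ _ h1; have hw2 := rw_mono _ _ _ _ _ h2.
have hd := coprime_disj _ _ _ _ hcop.
have [a [k [ha hk hpos hneg]]] : exists (a : 'X_{1..n}) (k : int),
    [/\ has_weight xi a w, 0 < k, (forall i, 0 < c i -> a i = 0%N)
      & (forall i, c i < 0 -> (a i)%:Z = - k * c i)].
  have [t ht] : exists t, forall j, (m2 j)%:Z = (m1 j)%:Z + t * c j.
    apply: kr => i.
    by rewrite (proj1 (has_weightE _ _ _ _) hw1 i) (proj1 (has_weightE _ _ _ _) hw2 i).
  case: (ltgtP t 0) => [tn|tp|t0].
  - exists m2, (- t); split => //; first by rewrite oppr_gt0.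
    + apply: (proj1 (orient _ c m2 m1 (- t) _ _ _)); rewrite ?oppr_gt0 //.
        by move=> j; rewrite ht; ring.
      by move=> i; rewrite orbC.
    + apply: (proj2 (orient _ c m2 m1 (- t) _ _ _)); rewrite ?oppr_gt0 //.
        by move=> j; rewrite ht; ring.
      by move=> i; rewrite orbC.
  - exists m1, t; split => //.
    + exact: (proj1 (orient _ c m1 m2 t ht tp hd)).
    + exact: (proj2 (orient _ c m1 m2 t ht tp hd)).
  - exfalso; move/negP: neq; apply; apply/eqP/mnmP => j.
    by have := ht j; rewrite t0 mul0r addr0 => /eqP; rewrite eqz_nat => /eqP.
pose A := fun j => (a j)%:Z.
have d1 := DL K n xi c w A 0 k hc cnz kr (proj1 (has_weightE _ _ _ _) ha).
have {d1} d1 : dimK (@Rw K n xi w) `|(k - 0 + 1)%R|%N.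
  apply: d1; last by lia.
  move=> s; split.
    move=> h; have := h ip; have := h jn; rewrite /A hneg // hpos //; nia.
  move=> hs i; rewrite /A; case: (ltgtP (c i) 0) => [cn|cp|c0].
  - rewrite hneg //; nia.
  - rewrite hpos //; nia.
  - rewrite c0; nia.
case: hM => al [hal hM].
have [hr hpq] := M_facts R n c al hM.
pose B := \sum_(i < n) `|al i|.
have hB : forall i, `|al i| <= B.
  by move=> i; rewrite /B (bigD1 i) //= lerDl sumr_ge0.
pose p := fun s => [forall i, (0 < c i) ==> (0 <= al i + s * c i)].
have [L hL] : exists L, forall s, p s = (L <= s).
  apply: (up_bound p _ B (- B - 1)).
  - move=> s /forallP h; apply/forallP => i; apply/implyP => ci; have := implyP (h i) ci; nia.
  - apply/forallP => i; apply/implyP => ci; have := hB i; nia.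
  - apply/negP => /forallP /(_ ip) /implyP /(_ cip); have := hB ip; nia.
pose q := fun s => [forall i, (c i < 0) ==> (0 <= al i + s * c i)].
have [U hU] : exists U, forall s, q s = (s <= U).
  apply: (down_bound q _ (- B) (B + 1)).
  - move=> s /forallP h; apply/forallP => i; apply/implyP => ci; have := implyP (h i) ci; nia.
  - apply/forallP => i; apply/implyP => ci; have := hB i; nia.
  - apply/negP => /forallP /(_ jn) /implyP /(_ cjn); have := hB jn; nia.
have LU : L <= U + 1.
  have np : p (L - 1) = false by rewrite hL; lia.
  move/negbT: np => /forallPn [i]; rewrite negb_imply => /andP [ci hi].
  have : q (L - 1).
    apply/forallP => j; apply/implyP => cj; apply: ltW; apply: (hpq i j) => //.
    by rewrite ltNge.
  rewrite hU; lia.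
have d2 : dimK (@Rw K n xi z) `|(U - L + 1)%R|%N.
  apply: (DL K n xi c z al L U hc cnz kr hal) => // s; split.
    move=> h; rewrite -hL -hU; apply/andP; split; apply/forallP => i; apply/implyP => _; exact: h.
  move=> /andP [hl hu'] i.
  have := hL s; rewrite hl => /forallP /(_ i) /implyP hp.
  have := hU s; rewrite hu' => /forallP /(_ i) /implyP hq.
  case: (ltgtP (c i) 0) => [cn|cp|c0]; [exact: hq|exact: hp|].
  by rewrite c0 mulr0 addr0; apply: hr.
have d3 : dimK (@Rw K n xi (fun i => (w i + z i)%N)) `|(U + k - L + 1)%R|%N.
  apply: (DL K n xi c _ (fun j => al j + A j) L (U + k) hc cnz kr) => //.
  - move=> i; rewrite (eq_bigr (fun j => (xi i j)%:Z * al j + (xi i j)%:Z * A j)); last first.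
      by move=> j _; rewrite mulrDr.
    by rewrite big_split /= hal (proj1 (has_weightE _ _ _ _) ha) PoszD addrC.
  - move=> s; split.
      move=> h; have hp : p s.
        apply/forallP => i; apply/implyP => ci; have := h i; rewrite /A hpos //; lia.
      have hq : q (s - k).
        apply/forallP => i; apply/implyP => ci; have := h i; rewrite /A hneg //; nia.
      move: hp hq; rewrite hL hU; lia.
    move=> /andP [hl hu'] i.
    have := hL s; rewrite hl => /forallP /(_ i) /implyP hp.
    have := hU (s - k); rewrite (_ : s - k <= U) ?(lerBlDr) => [/forallP /(_ i) /implyP hq|]; last by lia.
    rewrite /A; case: (ltgtP (c i) 0) => [cn|cp|c0].
    + have := hq cn; rewrite hneg //; nia.
    + have := hp cp; rewrite hpos //; nia.
    + have := hr _ c0; rewrite c0; lia.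
  - lia.
exists `|(k - 0 + 1)%R|%N, `|(U - L + 1)%R|%N, `|(U + k - L + 1)%R|%N; split => //.
lia.
Qed.
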